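(* Let $M$ be a $4$-dimensional manifold with local coordinates $(x^1,\dots,x^4)$, $e_i=\partial/\partial x^i$, and Riemannian metric $g$ with components \[(g_{ij})=\begin{pmatrix} A&B&C&B\\ B&A&B&C\\ C&B&A&B\\ B&C&B&A\end{pmatrix},\] $A,B,C$ smooth functions with $A>C>B>0$. Let $P$ be the almost product structure with component matrix having rows $(0,0,1,0),(0,0,0,1),(1,0,0,0),(0,1,0,0)$. Then $(M,g,P)$ belongs to the class $\mathcal{W}_2$ if and only if \[(A+C)(C_3-A_1)=2B(B_3-B_1),\quad C_3-A_1=A_3-C_1,\quad (A+C)(C_4-A_2)=2B(B_4-B_2),\quad C_4-A_2=A_4-C_2,\] where $A_i=\partial A/\partial x^i$, $B_i=\partial B/\partial x^i$, $C_i=\partial C/\partial x^i$.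
   Context: Let $\nabla$ be the Levi-Civita connection of $g$, $F(x,y,z)=g((\nabla_xP)y,z)$, and $\theta(x)=g^{ij}F(e_i,e_j,x)$ with $(g^{ij})$ the inverse of $(g_{ij})$. The manifold $(M,g,P)$ belongs to the class $\mathcal{W}_2$ if for all vector fields $x,y,z$: \[F(x,y,Pz)+F(y,z,Px)+F(z,x,Py)=0\quad\text{and}\quad \theta(z)=0.\] *)

(* Defs.v *)
(* Local-coordinate setting:
   the chart domain of M is an open set U of R^4 = 'rV[R]_4. *)
From HB Require Import structures.
From mathcomp Require Import all_boot all_order all_algebra.
From mathcomp Require Import all_classical all_reals all_analysis.
Set Implicit Arguments. Unset Strict Implicit. Unset Printing Implicit Defensive.
Import Order.TTheory GRing.Theory Num.Theory.
Import numFieldNormedType.Exports.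
Local Open Scope ring_scope.
Local Open Scope classical_set_scope.

Section Defs.
Variable R : realType.
Notation V := 'rV[R]_4.

Definition ecoord (i : 'I_4) : V := delta_mx 0 i.

(* coordinate index x^(n+1) <-> n : 'I_4 *)
Definition ix (n : nat) : 'I_4 := inord n.

Definition pd (i : 'I_4) (f : V -> R) : V -> R := fun x => 'D_(ecoord i) f x.

Fixpoint pd_iter (l : seq 'I_4) (f : V -> R) : V -> R :=
  match l with [::] => f | i :: l' => pd i (pd_iter l' f) end.

Definition smooth_on (U : set V) (f : V -> R) : Prop :=
  forall (l : seq 'I_4) x, U x -> differentiable (pd_iter l f) x.

Definition gmat (g : 'I_4 -> 'I_4 -> V -> R) (x : V) : 'M[R]_4 :=
  \matrix_(i, j) g i j x.
Definition ginv (g : 'I_4 -> 'I_4 -> V -> R) (x : V) : 'M[R]_4 := invmx (gmat g x).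

(* Christoffel symbols of the Levi-Civita connection:
   nabla_{e_k} e_m = sum_l Gam^l_{km} e_l *)
Definition Gam1 g (k m j : 'I_4) (x : V) : R :=
  2^-1 * (pd k (g m j) x + pd m (g k j) x - pd j (g k m) x).
Definition Gam g (l k m : 'I_4) (x : V) : R :=
  \sum_s ginv g x l s * Gam1 g k m s x.

(* components of nabla_{e_k} P for a structure P with constant components P^l_i
   (P e_i = sum_l P l i e_l) *)
Definition covP g (P : 'M[R]_4) (k l i : 'I_4) (x : V) : R :=
  \sum_m Gam g l k m x * P m i - \sum_m P l m * Gam g m k i x.

(* F(e_k, e_i, e_j) = g((nabla_{e_k} P) e_i, e_j) *)
Definition Fcomp g P (k i j : 'I_4) (x : V) : R :=
  \sum_l covP g P k l i x * g l j x.

Definition Fat g P (x : V) (u v w : V) : R :=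
  \sum_k \sum_i \sum_j u 0 k * v 0 i * w 0 j * Fcomp g P k i j x.

Definition Pv (P : 'M[R]_4) (w : V) : V := \row_l \sum_m P l m * w 0 m.

Definition theta g P (x : V) (w : V) : R :=
  \sum_i \sum_j ginv g x i j * Fat g P x (ecoord i) (ecoord j) w.

Definition W2 g P (U : set V) : Prop :=
  forall x, U x -> forall u v w : V,
    Fat g P x u v (Pv P w) + Fat g P x v w (Pv P u) + Fat g P x w u (Pv P v) = 0
    /\ theta g P x w = 0.

(* the metric of the paper: (g_ij) circulant with first row (A, B, C, B) *)
Definition gABC (A B C : V -> R) (i j : 'I_4) : V -> R :=
  let d := ((i + 4 - j) %% 4)%N in
  if d == 0%N then A else if d == 2%N then C else B.

Definition Pmat : 'M[R]_4 :=
  \matrix_(i, j) (if ((i + 4 - j) %% 4)%N == 2%N then 1 else 0).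

End Defs.

(* Main.v *)
Require Import Defs.
From mathcomp Require Import all_boot all_order all_algebra.
From mathcomp Require Import all_classical all_reals all_analysis.
From mathcomp Require Import ring lra.
Import Order.TTheory GRing.Theory Num.Theory.
Import numFieldNormedType.Exports.
Local Open Scope ring_scope.

Section Alg.
Variable R : realType.

Lemma ixv n : (n < 4)%N -> nat_of_ord (ix n) = n.
Proof. by move=> h; rewrite /ix inordK. Qed.

Definition o0 : 'I_4 := @Ordinal 4 0 isT.
Definition o1 : 'I_4 := @Ordinal 4 1 isT.
Definition o2 : 'I_4 := @Ordinal 4 2 isT.
Definition o3 : 'I_4 := @Ordinal 4 3 isT.
Lemma ixo : (ix 0 = o0) * (ix 1 = o1) * (ix 2 = o2) * (ix 3 = o3).
Proof. by do !split; apply/val_inj; rewrite /= ixv. Qed.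

Lemma sum4 (f : 'I_4 -> R) : \sum_i f i = f (o0) + f (o1) + f (o2) + f (o3).
Proof.
rewrite !big_ord_recr big_ord0 /= add0r.
by congr (_ + _ + _ + _); congr f; apply/val_inj.
Qed.

Lemma ord4_ind (P : 'I_4 -> Prop) : P (o0) -> P (o1) -> P (o2) -> P (o3) -> forall i, P i.
Proof.
move=> h0 h1 h2 h3 [[|[|[|[|n]]]] Hi] //.
- by rewrite (bool_irrelevance Hi isT).
- by rewrite (bool_irrelevance Hi isT).
- by rewrite (bool_irrelevance Hi isT).
- by rewrite (bool_irrelevance Hi isT).
Qed.

Definition circ (a b c : R) : 'M[R]_4 :=
  \matrix_(i, j) (let d := ((i + 4 - j) %% 4)%N in
                  if d == 0%N then a else if d == 2%N then c else b).

Lemma c00 a b c : circ a b c (o0) (o0) = a. Proof. by rewrite mxE. Qed.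
Lemma c01 a b c : circ a b c (o0) (o1) = b. Proof. by rewrite mxE. Qed.
Lemma c02 a b c : circ a b c (o0) (o2) = c. Proof. by rewrite mxE. Qed.
Lemma c03 a b c : circ a b c (o0) (o3) = b. Proof. by rewrite mxE. Qed.
Lemma c10 a b c : circ a b c (o1) (o0) = b. Proof. by rewrite mxE. Qed.
Lemma c11 a b c : circ a b c (o1) (o1) = a. Proof. by rewrite mxE. Qed.
Lemma c12 a b c : circ a b c (o1) (o2) = b. Proof. by rewrite mxE. Qed.
Lemma c13 a b c : circ a b c (o1) (o3) = c. Proof. by rewrite mxE. Qed.
Lemma c20 a b c : circ a b c (o2) (o0) = c. Proof. by rewrite mxE. Qed.
Lemma c21 a b c : circ a b c (o2) (o1) = b. Proof. by rewrite mxE. Qed.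
Lemma c22 a b c : circ a b c (o2) (o2) = a. Proof. by rewrite mxE. Qed.
Lemma c23 a b c : circ a b c (o2) (o3) = b. Proof. by rewrite mxE. Qed.
Lemma c30 a b c : circ a b c (o3) (o0) = b. Proof. by rewrite mxE. Qed.
Lemma c31 a b c : circ a b c (o3) (o1) = c. Proof. by rewrite mxE. Qed.
Lemma c32 a b c : circ a b c (o3) (o2) = b. Proof. by rewrite mxE. Qed.
Lemma c33 a b c : circ a b c (o3) (o3) = a. Proof. by rewrite mxE. Qed.
Definition ctab := (c00, c01, c02, c03, c10, c11, c12, c13, c20, c21, c22, c23, c30, c31, c32, c33).
Lemma p00 : Pmat R (o0) (o0) = 0. Proof. by rewrite mxE. Qed.
Lemma p01 : Pmat R (o0) (o1) = 0. Proof. by rewrite mxE. Qed.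
Lemma p02 : Pmat R (o0) (o2) = 1. Proof. by rewrite mxE. Qed.
Lemma p03 : Pmat R (o0) (o3) = 0. Proof. by rewrite mxE. Qed.
Lemma p10 : Pmat R (o1) (o0) = 0. Proof. by rewrite mxE. Qed.
Lemma p11 : Pmat R (o1) (o1) = 0. Proof. by rewrite mxE. Qed.
Lemma p12 : Pmat R (o1) (o2) = 0. Proof. by rewrite mxE. Qed.
Lemma p13 : Pmat R (o1) (o3) = 1. Proof. by rewrite mxE. Qed.
Lemma p20 : Pmat R (o2) (o0) = 1. Proof. by rewrite mxE. Qed.
Lemma p21 : Pmat R (o2) (o1) = 0. Proof. by rewrite mxE. Qed.
Lemma p22 : Pmat R (o2) (o2) = 0. Proof. by rewrite mxE. Qed.
Lemma p23 : Pmat R (o2) (o3) = 0. Proof. by rewrite mxE. Qed.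
Lemma p30 : Pmat R (o3) (o0) = 0. Proof. by rewrite mxE. Qed.
Lemma p31 : Pmat R (o3) (o1) = 1. Proof. by rewrite mxE. Qed.
Lemma p32 : Pmat R (o3) (o2) = 0. Proof. by rewrite mxE. Qed.
Lemma p33 : Pmat R (o3) (o3) = 0. Proof. by rewrite mxE. Qed.
Definition ptab := (p00, p01, p02, p03, p10, p11, p12, p13, p20, p21, p22, p23, p30, p31, p32, p33).

Lemma PvE (P : 'M[R]_4) (w : 'rV[R]_4) j : (Pv P w) 0 j = \sum_m P j m * w 0 m.
Proof. by rewrite mxE. Qed.

Definition s4 (i : 'I_4) : 'I_4 := Ordinal (ltn_pmod (i + 2) (isT : (0 < 4)%N)).
Lemma s0 : s4 (o0) = o2. Proof. by apply/val_inj. Qed.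
Lemma s1 : s4 (o1) = o3. Proof. by apply/val_inj. Qed.
Lemma s2 : s4 (o2) = o0. Proof. by apply/val_inj. Qed.
Lemma s3 : s4 (o3) = o1. Proof. by apply/val_inj. Qed.
Definition stab := (s0, s1, s2, s3).

Lemma Psum_l (f : 'I_4 -> R) i : \sum_m Pmat R m i * f m = f (s4 i).
Proof.
elim/ord4_ind: i; rewrite sum4 !ptab stab;
  by rewrite ?(mul0r, mul1r, addr0, add0r).
Qed.
Lemma Psum_r (f : 'I_4 -> R) i : \sum_m f m * Pmat R i m = f (s4 i).
Proof.
elim/ord4_ind: i; rewrite sum4 !ptab stab;
  by rewrite ?(mulr0, mulr1, addr0, add0r).
Qed.
Lemma Psum_row (f : 'I_4 -> R) i : \sum_m Pmat R i m * f m = f (s4 i).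
Proof.
elim/ord4_ind: i; rewrite sum4 !ptab stab;
  by rewrite ?(mul0r, mul1r, addr0, add0r).
Qed.
Lemma Pv_s w j : (Pv (Pmat R) w) 0 j = w 0 (s4 j).
Proof. by rewrite PvE (Psum_row (fun m => w 0 m)). Qed.

Section Fp.
Variables dA dB dC : 'I_4 -> R.
Definition G1 (k m j : 'I_4) : R :=
  2^-1 * (circ (dA k) (dB k) (dC k) m j + circ (dA m) (dB m) (dC m) k j
          - circ (dA j) (dB j) (dC j) k m).
Definition Fp (k i j : 'I_4) : R :=
  \sum_m Pmat R m i * G1 k m j - \sum_m G1 k i m * Pmat R j m.
Lemma Fp_eq k i j : Fp k i j = G1 k (s4 i) j - G1 k i (s4 j).
Proof. by rewrite /Fp Psum_l (Psum_r (fun m => G1 k i m)). Qed.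
Definition Fa (u v w : 'rV[R]_4) : R :=
  \sum_k \sum_i \sum_j u 0 k * v 0 i * w 0 j * Fp k i j.

Lemma cyc u v w :
  Fa u v (Pv (Pmat R) w) + Fa v w (Pv (Pmat R) u) + Fa w u (Pv (Pmat R) v) = 0.
Proof.
rewrite /Fa.
rewrite !sum4.
rewrite !Pv_s.
rewrite !Fp_eq.
rewrite !stab.
rewrite /G1 !ctab.
ring.
Qed.

Lemma theta_form a b c l :
  \sum_i \sum_j circ a b c i j * Fp i j l =
  2 * (a * dA (s4 l) + 2 * b * dB (s4 l) + c * dC (s4 l)
       - c * dA l - 2 * b * dB l - a * dC l).
Proof.
elim/ord4_ind: l; rewrite !sum4 !Fp_eq !stab /G1 !ctab; field; by rewrite ?pnatr_eq0.
Qed.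

Lemma Fa_ecoord i j w :
  Fa (ecoord R i) (ecoord R j) w = \sum_l w 0 l * Fp i j l.
Proof.
rewrite /Fa /ecoord.
elim/ord4_ind: i; elim/ord4_ind: j; rewrite !sum4 !mxE /=;
  rewrite ?(mul0r, mulr0, mul1r, mulr1, addr0, add0r); done.
Qed.
End Fp.

Lemma circ_mul a b c a' b' c' :
  circ a b c *m circ a' b' c' =
  circ (a * a' + 2 * b * b' + c * c') (a * b' + b * a' + b * c' + c * b')
       (a * c' + 2 * b * b' + c * a').
Proof.
apply/matrixP => i j; rewrite [LHS]mxE.
elim/ord4_ind: i; elim/ord4_ind: j; rewrite sum4 !ctab; ring.
Qed.

Lemma circ1 : circ 1 0 0 = 1%:M.
Proof.
apply/matrixP => i j.
by elim/ord4_ind: i; elim/ord4_ind: j; rewrite !ctab mxE /= ?eqxx.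
Qed.

Lemma circ_tr a b c : (circ a b c)^T = circ a b c.
Proof.
apply/matrixP => i j; rewrite mxE.
by elim/ord4_ind: i; elim/ord4_ind: j; rewrite !ctab.
Qed.

Lemma Pmat_tr : (Pmat R)^T = Pmat R.
Proof.
apply/matrixP => i j; rewrite mxE.
by elim/ord4_ind: i; elim/ord4_ind: j; rewrite !ptab.
Qed.

Lemma Pmat_circ a b c : Pmat R *m circ a b c = circ a b c *m Pmat R.
Proof.
apply/matrixP => i j; rewrite [LHS]mxE [RHS]mxE.
elim/ord4_ind: i; elim/ord4_ind: j; rewrite !sum4 !ptab !ctab; ring.
Qed.

Lemma sum_ecoord (f : 'I_4 -> R) i : \sum_l (ecoord R i) 0 l * f l = f i.
Proof.
elim/ord4_ind: i; rewrite sum4 !mxE /=;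
  by rewrite ?(mul0r, mulr0, mul1r, mulr1, addr0, add0r).
Qed.

Lemma key (A B C a0 a2 b0 b2 c0 c2 : R) : 0 < B -> B < C -> C < A ->
  let D := (A + C) ^+ 2 - 4 * B ^+ 2 in let e := A - C in
  let a := 2^-1 * ((A + C) / D + e^-1) in
  let c := 2^-1 * ((A + C) / D - e^-1) in
  let b := - (B / D) in
  (a * a2 + 2 * b * b2 + c * c2 - c * a0 - 2 * b * b0 - a * c0 = 0 /\
   a * a0 + 2 * b * b0 + c * c0 - c * a2 - 2 * b * b2 - a * c2 = 0) <->
  ((A + C) * (c2 - a0) = 2 * B * (b2 - b0) /\ c2 - a0 = a2 - c0).
Proof.
move=> hB hBC hCA D e a c b.
have he : e != 0 by rewrite /e subr_eq0 gt_eqF.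
have hD : D != 0.
  have -> : D = (A + C - 2 * B) * (A + C + 2 * B) by rewrite /D; ring.
  by rewrite gt_eqF // mulr_gt0 //; lra.
set X := a0 + a2 - c0 - c2.
set W := (A + C) * (a2 + c2 - a0 - c0) - 4 * B * (b2 - b0).
have h2 : (2 : R) != 0 by rewrite pnatr_eq0.
have E0 : a * a2 + 2 * b * b2 + c * c2 - c * a0 - 2 * b * b0 - a * c0
          = (D * X + e * W) / (2 * D * e).
  rewrite /a /b /c /X /W; field; rewrite ?h2 ?hD ?he //.
have E2 : a * a0 + 2 * b * b0 + c * c0 - c * a2 - 2 * b * b2 - a * c2
          = (D * X - e * W) / (2 * D * e).
  rewrite /a /b /c /X /W; field; rewrite ?h2 ?hD ?he //.
rewrite E0 E2.
have hden : 2 * D * e != 0 by rewrite !mulf_neq0.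
split.
- move=> [/eqP e0 /eqP e2].
  move: e0 e2; rewrite !mulf_eq0 !invr_eq0 (negbTE hden) !orbF => /eqP e0 /eqP e2.
  have hX : D * X = 0 by lra.
  have hW : e * W = 0 by lra.
  move/eqP: hX; rewrite mulf_eq0 (negbTE hD) /= => /eqP hX.
  move/eqP: hW; rewrite mulf_eq0 (negbTE he) /= => /eqP hW.
  have ha2 : a2 = c0 + c2 - a0 by rewrite /X in hX; lra.
  split; last by lra.
  rewrite /W ha2 in hW.
  apply/eqP; rewrite -subr_eq0; apply/eqP.
  have -> : (A + C) * (c2 - a0) - 2 * B * (b2 - b0)
     = 2^-1 * ((A + C) * (c0 + c2 - a0 + c2 - a0 - c0) - 4 * B * (b2 - b0)).
    by field.
  by rewrite hW mulr0.
- move=> [h1 h3].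
  have hX : X = 0 by rewrite /X; lra.
  have hW : W = 0.
    rewrite /W.
    have -> : a2 + c2 - a0 - c0 = 2 * (c2 - a0) by lra.
    by rewrite mulrCA h1; ring.
  by rewrite hX hW !mulr0 subr0 addr0 mul0r.
Qed.
End Alg.
Arguments G1 {R}. Arguments Fp {R}. Arguments Fa {R}. Arguments circ {R}.

Section Glue.
Variable R : realType.
Variables (A B C : 'rV[R]_4 -> R) (x : 'rV[R]_4).
Local Notation g := (gABC A B C).
Local Notation dA := (fun k => pd k A x).
Local Notation dB := (fun k => pd k B x).
Local Notation dC := (fun k => pd k C x).

Lemma pdg k m j : pd k (g m j) x = circ (pd k A x) (pd k B x) (pd k C x) m j.
Proof. by rewrite mxE /gABC /=; case: ifP => _ //; case: ifP. Qed.

Lemma gE m j : g m j x = circ (A x) (B x) (C x) m j.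
Proof. by rewrite mxE /gABC /=; case: ifP => _ //; case: ifP. Qed.

Lemma gmatE : gmat g x = circ (A x) (B x) (C x).
Proof. by apply/matrixP => i j; rewrite mxE gE. Qed.

Lemma Gam1E k m j : Gam1 g k m j x = G1 dA dB dC k m j.
Proof. by rewrite /Gam1 /G1 !pdg. Qed.

Lemma Fcomp_gen (P G H : 'M[R]_4) (gam : 'I_4 -> 'I_4 -> R) k i j :
  (forall l j, g l j x = G l j) -> ginv g x = H ->
  (forall m s, Gam1 g k m s x = gam m s) ->
  H *m G = 1%:M -> H^T = H -> P^T *m G = G *m P^T ->
  Fcomp g P k i j x = \sum_m P m i * gam m j - \sum_m gam i m * P j m.
Proof.
move=> hg hinv hgam hHG hHt hPG.
pose Gm : 'M[R]_4 := \matrix_(m, s) gam m s.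
pose X := H *m Gm^T.
have e1 : Fcomp g P k i j x = (((X *m P - P *m X)^T *m G) i j).
  rewrite /Fcomp mxE; apply: eq_bigr => l _.
  rewrite hg; congr (_ * _).
  rewrite /covP !mxE; congr (_ - _); apply: eq_bigr => m _;
    rewrite /Gam hinv !mxE; congr (_ * _) || congr (_ * _); apply: eq_bigr => s _;
    by rewrite !mxE hgam.
have e2 : (X *m P - P *m X)^T *m G = P^T *m Gm - Gm *m P^T.
  rewrite /X raddfB /= !trmx_mul trmxK hHt mulmxBl.
  rewrite -!mulmxA hHG mulmx1 hPG !mulmxA -[Gm *m H *m G]mulmxA hHG mulmx1.
  done.
rewrite e1 e2 !mxE; congr (_ + _).
  by apply: eq_bigr => m _; rewrite !mxE.
by congr (- _); apply: eq_bigr => m _; rewrite !mxE.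
Qed.

Definition Hc (a b c : R) : 'M[R]_4 :=
  let D := (a + c) ^+ 2 - 4 * b ^+ 2 in let e := a - c in
  circ (2^-1 * ((a + c) / D + e^-1)) (- (b / D)) (2^-1 * ((a + c) / D - e^-1)).

Lemma HcG a b c : 0 < b -> b < c -> c < a -> circ a b c *m Hc a b c = 1%:M.
Proof.
move=> hB hBC hCA.
have he : a - c != 0 by rewrite subr_eq0 gt_eqF.
have hD : (a + c) ^+ 2 - 4 * b ^+ 2 != 0.
  have -> : (a + c) ^+ 2 - 4 * b ^+ 2 = (a + c - 2 * b) * (a + c + 2 * b) by ring.
  by rewrite gt_eqF // mulr_gt0 //; lra.
have h2 : (2 : R) != 0 by rewrite pnatr_eq0.
rewrite /Hc circ_mul -circ1; congr circ; field; by rewrite ?h2 ?hD ?he.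
Qed.

Section Loc.
Hypotheses (hB : 0 < B x) (hBC : B x < C x) (hCA : C x < A x).

Lemma ginvE : ginv g x = Hc (A x) (B x) (C x).
Proof.
have hG := HcG _ _ _ hB hBC hCA.
have [hu _] := mulmx1_unit hG.
by rewrite /ginv gmatE -[invmx _]mulmx1 -hG mulmxA mulVmx // mul1mx.
Qed.

Lemma Fat_eq u v w : Fat g (Pmat R) x u v w = Fa dA dB dC u v w.
Proof.
rewrite /Fat /Fa; apply: eq_bigr => k _; apply: eq_bigr => i _;
  apply: eq_bigr => j _; congr (_ * _).
rewrite /Fp; apply: (@Fcomp_gen (Pmat R) (circ (A x) (B x) (C x)) (Hc (A x) (B x) (C x))).
- exact: gE.
- exact: ginvE.
- exact: Gam1E.
- exact: mulmx1C (HcG _ _ _ hB hBC hCA).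
- by rewrite /Hc circ_tr.
- by rewrite Pmat_tr Pmat_circ.
Qed.

Lemma sum_swap (M : 'M[R]_4) (F : 'I_4 -> 'I_4 -> 'I_4 -> R) (w : 'rV[R]_4) :
  \sum_i \sum_j M i j * (\sum_l w 0 l * F i j l) =
  \sum_l w 0 l * (\sum_i \sum_j M i j * F i j l).
Proof. rewrite !sum4; ring. Qed.


Lemma thetaE w : theta g (Pmat R) x w =
  \sum_l w 0 l * (\sum_i \sum_j Hc (A x) (B x) (C x) i j * Fp dA dB dC i j l).
Proof.
rewrite /theta ginvE -sum_swap; apply: eq_bigr => i _; apply: eq_bigr => j _.
by rewrite Fat_eq Fa_ecoord.
Qed.

Lemma local :
  (forall u v w : 'rV[R]_4,
    Fat g (Pmat R) x u v (Pv (Pmat R) w) + Fat g (Pmat R) x v w (Pv (Pmat R) u)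
    + Fat g (Pmat R) x w u (Pv (Pmat R) v) = 0 /\ theta g (Pmat R) x w = 0) <->
  [/\ (A x + C x) * (pd o2 C x - pd o0 A x) = 2 * B x * (pd o2 B x - pd o0 B x),
      pd o2 C x - pd o0 A x = pd o2 A x - pd o0 C x,
      (A x + C x) * (pd o3 C x - pd o1 A x) = 2 * B x * (pd o3 B x - pd o1 B x)
    & pd o3 C x - pd o1 A x = pd o3 A x - pd o1 C x].
Proof.
set D := (A x + C x) ^+ 2 - 4 * B x ^+ 2.
set e := A x - C x.
set a := 2^-1 * ((A x + C x) / D + e^-1).
set c := 2^-1 * ((A x + C x) / D - e^-1).
set b := - (B x / D).
have HcE : Hc (A x) (B x) (C x) = circ a b c by [].
have K02 := @key R (A x) (B x) (C x) (pd o0 A x) (pd o2 A x) (pd o0 B x) (pd o2 B x) (pd o0 C x) (pd o2 C x) hB hBC hCA.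
have K13 := @key R (A x) (B x) (C x) (pd o1 A x) (pd o3 A x) (pd o1 B x) (pd o3 B x) (pd o1 C x) (pd o3 C x) hB hBC hCA.
have h2 : (2 : R) != 0 by rewrite pnatr_eq0.
split.
- move=> h.
  have Ez l : a * pd (s4 l) A x + 2 * b * pd (s4 l) B x + c * pd (s4 l) C x
      - c * pd l A x - 2 * b * pd l B x - a * pd l C x = 0.
    have := (h 0 0 (ecoord R l)).2.
    rewrite thetaE sum_ecoord HcE theta_form => /eqP; rewrite mulf_eq0 (negbTE h2) /=.
    by move/eqP.
  have E0 := Ez o0; have E1 := Ez o1; have E2 := Ez o2; have E3 := Ez o3.
  rewrite !stab in E0 E1 E2 E3.
  have [k1 k2] := (K02.1 (conj E0 E2)).
  have [k3 k4] := (K13.1 (conj E1 E3)).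
  by split.
- move=> [e1 e2 e3 e4] u v w; split.
    by rewrite !Fat_eq; exact: cyc.
  rewrite thetaE; apply: big1 => l _; rewrite HcE theta_form.
  have [E0 E2] := K02.2 (conj e1 e2).
  have [E1 E3] := K13.2 (conj e3 e4).
  apply/eqP; rewrite mulf_eq0 mulf_eq0; apply/orP; right; apply/orP; right; apply/eqP.
  by elim/ord4_ind: l; rewrite stab.
Qed.
End Loc.
End Glue.

Local Open Scope classical_set_scope.

Theorem theorem3p8 (R : realType) (U : set 'rV[R]_4) (A B C : 'rV[R]_4 -> R) :
  open U ->
  smooth_on U A -> smooth_on U B -> smooth_on U C ->
  (forall x, U x -> 0 < B x /\ B x < C x /\ C x < A x) ->
  (W2 (gABC A B C) (Pmat R) U <->
   forall x, U x ->
     let i1 := ix 0 in let i2 := ix 1 in let i3 := ix 2 in let i4 := ix 3 in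
     [/\ (A x + C x) * (pd i3 C x - pd i1 A x) = 2 * B x * (pd i3 B x - pd i1 B x),
         pd i3 C x - pd i1 A x = pd i3 A x - pd i1 C x,
         (A x + C x) * (pd i4 C x - pd i2 A x) = 2 * B x * (pd i4 B x - pd i2 B x)
       & pd i4 C x - pd i2 A x = pd i4 A x - pd i2 C x]).
Proof.
move=> _ _ _ _ hpos; split.
- move=> hW x Ux /=; rewrite !ixo.
  have [hB [hBC hCA]] := hpos x Ux.
  by apply/(@local R A B C x hB hBC hCA); exact: hW.
- move=> h x Ux.
  have [hB [hBC hCA]] := hpos x Ux.
  apply/(@local R A B C x hB hBC hCA).
  by have := h x Ux; rewrite /= !ixo.
Qed.
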